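(* Let $q\in\mathcal{Q}_\pm$ with $q(1)\ne0$ and $q(-1)\ne0$, let $a,b\in\mathbb{R}$, and suppose that $\rho$ is a quasi-rational function with $\rho'(x)=q(x)(1-x)^a(1+x)^b$. Then exactly one of the following mutually exclusive possibilities holds: (i) $\rho\in(1-x)^{a+1}(1+x)^{b+1}\mathcal{Q}_\pm$; (ii) $\rho\in(1+x)^{b+1}\mathcal{Q}_\pm$, $a\in\mathbb{N}_0$ and $\rho(1)\ne0$; (iii) $\rho\in(1-x)^{a+1}\mathcal{Q}_\pm$, $b\in\mathbb{N}_0$ and $\rho(-1)\ne0$; (iv) $\rho\in\mathcal{Q}_\pm$, $a,b\in\mathbb{N}_0$, and $\rho(1)\ne0$, $\rho(-1)\ne0$.
   Context: $\mathcal{Q}_\pm$ denotes the set of real rational functions that are regular at $x=1$ and at $x=-1$. A function $\rho$ is quasi-rational if $\rho'/\rho$ is rational. *)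

(* Defs.v *)
From mathcomp Require Import all_boot all_order all_algebra.
From mathcomp Require Import all_classical all_reals all_analysis.
Set Implicit Arguments. Unset Strict Implicit. Unset Printing Implicit Defensive.
Import Order.TTheory GRing.Theory Num.Theory.
Local Open Scope ring_scope.

(* Functions are considered on the open interval (-1,1).  An identity
   between (quasi-)rational functions is required to hold at every point
   of (-1,1) except finitely many (poles / zeros). *)
Definition cofin11 {R : realType} (P : R -> Prop) : Prop :=
  exists s : seq R, forall x : R, -1 < x < 1 -> x \notin s -> P x.

(* rational function p/r with p r real polynomials, regular at 1 and -1 *)
Definition regpm {R : realType} (r : {poly R}) : Prop :=
  r.[1] != 0 /\ r.[-1] != 0.

Definition in_wQpm {R : realType} (w f : R -> R) : Prop :=
  exists p r : {poly R}, regpm r /\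
    cofin11 (fun x => f x = w x * (p.[x] / r.[x])).

Definition quasi_rational {R : realType} (rho : R -> R) : Prop :=
  exists u v : {poly R}, v != 0 /\
    cofin11 (fun x => derivable rho x 1 /\ rho x != 0 /\
                      derive1 rho x / rho x = u.[x] / v.[x]).

Definition is_nat0 {R : realType} (a : R) : Prop := exists n : nat, a = n%:R.

Definition case_i {R : realType} (a b : R) (rho : R -> R) : Prop :=
  in_wQpm (fun x => powR (1 - x) (a + 1) * powR (1 + x) (b + 1)) rho.

(* (ii) rho = (1+x)^(b+1) p/r with p/r in Q_pm, a in N_0, and
   rho(1) = 2^(b+1) p(1)/r(1) <> 0 *)
Definition case_ii {R : realType} (a b : R) (rho : R -> R) : Prop :=
  (exists p r : {poly R}, regpm r /\
    cofin11 (fun x => rho x = powR (1 + x) (b + 1) * (p.[x] / r.[x])) /\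
    powR (1 + 1) (b + 1) * (p.[1] / r.[1]) != 0) /\ is_nat0 a.

(* (iii) rho = (1-x)^(a+1) p/r, b in N_0, rho(-1) = 2^(a+1) p(-1)/r(-1) <> 0 *)
Definition case_iii {R : realType} (a b : R) (rho : R -> R) : Prop :=
  (exists p r : {poly R}, regpm r /\
    cofin11 (fun x => rho x = powR (1 - x) (a + 1) * (p.[x] / r.[x])) /\
    powR (1 - (-1)) (a + 1) * (p.[-1] / r.[-1]) != 0) /\ is_nat0 b.

Definition case_iv {R : realType} (a b : R) (rho : R -> R) : Prop :=
  (exists p r : {poly R}, regpm r /\
    cofin11 (fun x => rho x = p.[x] / r.[x]) /\
    p.[1] / r.[1] != 0 /\ p.[-1] / r.[-1] != 0) /\ is_nat0 a /\ is_nat0 b.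

(* Main.v *)
Require Import Defs.
From mathcomp Require Import all_boot all_order all_algebra.
From mathcomp Require Import all_classical all_reals all_analysis.
From mathcomp Require Import ring lra zify.
Import Order.TTheory GRing.Theory Num.Theory numFieldNormedType.Exports.
Local Open Scope ring_scope.

Section Helpers.
Variable R : realType.


Lemma prodX_neq0 (s : seq R) : \prod_(z <- s) ('X - z%:P) != 0 :> {poly R}.
Proof. exact/monic_neq0/monic_prod_XsubC. Qed.

Lemma prodX_horner (s : seq R) x : x \notin s -> (\prod_(z <- s) ('X - z%:P)).[x] != 0.
Proof.
elim: s => [|z s IH]; first by rewrite big_nil hornerE oner_neq0.
rewrite in_cons negb_or => /andP[xz xs]; rewrite big_cons hornerM hornerXsubC.
by rewrite mulf_neq0 ?subr_eq0 // IH.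
Qed.

Lemma prodX_root (s : seq R) x : x \in s -> (\prod_(z <- s) ('X - z%:P)).[x] = 0.
Proof.
elim: s => [|z s IH]; first by [].
rewrite in_cons big_cons hornerM hornerXsubC => /orP[/eqP->|/IH->]; last by rewrite mulr0.
by rewrite subrr mul0r.
Qed.

Lemma poly0_11 (P : {poly R}) : (forall x : R, -1 < x < 1 -> P.[x] = 0) -> P = 0.
Proof.
move=> H; apply/eqP; apply/negPn/negP => P0.
pose rs := [seq ((i.+2)%:R : R)^-1 | i <- iota 0 (size P)].
have hall : all (root P) rs.
  apply/allP => y /mapP[i _ ->]; apply/eqP/H.
  have h : (0 : R) < (i.+2)%:R^-1 by rewrite invr_gt0 ltr0n.
  rewrite (lt_trans _ h) ?ltrN10 //= invf_lt1 ?ltr0n // ltr1n //.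
have huniq : uniq rs.
  rewrite map_inj_uniq ?iota_uniq // => i j /invr_inj /eqP.
  by rewrite eqr_nat => /eqP [].
by have := max_poly_roots P0 hall huniq; rewrite size_map size_iota ltnn.
Qed.

Lemma poly0_cofin (P : {poly R}) (s : seq R) :
  (forall x : R, -1 < x < 1 -> x \notin s -> P.[x] = 0) -> P = 0.
Proof.
move=> H.
have : P * \prod_(z <- s) ('X - z%:P) = 0.
  apply: poly0_11 => x hx; rewrite hornerM.
  case: (boolP (x \in s)) => xs; first by rewrite prodX_root // mulr0.
  by rewrite H // mul0r.
by move/eqP; rewrite mulf_eq0 (negPf (prodX_neq0 s)) orbF => /eqP.
Qed.



Lemma e_deriv (c : R) (p : {poly R}) (i : nat) :
  ('X - c%:P) * (p * ('X - c%:P)^+i)^`() =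
  ('X - c%:P)^+i * (('X - c%:P) * p^`() + p *+ i).
Proof.
rewrite derivM deriv_exp derivXsubC mul1r.
case: i => [|i] /=; first by rewrite !expr0 !mulr0n; ring.
rewrite exprS; ring.
Qed.

Lemma mult_cmp (c : R) (L B : {poly R}) (k l : nat) :
  L.[c] != 0 -> ('X - c%:P)^+k * L = ('X - c%:P)^+l * B ->
  (l <= k)%N /\ (B.[c] != 0 -> k = l).
Proof.
move=> Lc H.
have gen : forall (k l : nat) (L B : {poly R}), L.[c] != 0 ->
    ('X - c%:P)^+k * L = ('X - c%:P)^+l * B -> (l <= k)%N.
  move=> k' l' L' B' Lc' H'; rewrite leqNgt; apply/negP => lt.
  have e0 : ('X - c%:P)^+k' != 0 by rewrite expf_neq0 // polyXsubC_eq0.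
  move: H'; rewrite -(subnKC (ltnW lt)) exprD -mulrA => /(mulfI e0) H'.
  move: Lc'; rewrite H' hornerM horner_exp hornerXsubC subrr expr0n.
  by rewrite subn_eq0 leqNgt lt mul0r eqxx.
split; first exact: gen H.
move=> Bc; apply/eqP; rewrite eqn_leq (gen _ _ _ _ Bc (esym H)) /=.
exact: gen H.
Qed.


Lemma mult_lemma (c g : R) (qn qd f K N1 D1 : {poly R}) (i1 i2 : nat) :
  f.[c] != 0 -> K.[c] = f.[c] * g -> qn.[c] != 0 -> qd.[c] != 0 ->
  N1.[c] != 0 -> D1.[c] != 0 ->
  qn * (D1 * ('X - c%:P)^+i2)^+2 * (('X - c%:P) * f) =
  qd * (K * (N1 * ('X - c%:P)^+i1) * (D1 * ('X - c%:P)^+i2) +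
        ('X - c%:P) * f * ((N1 * ('X - c%:P)^+i1)^`() * (D1 * ('X - c%:P)^+i2)
                - (N1 * ('X - c%:P)^+i1) * (D1 * ('X - c%:P)^+i2)^`())) ->
  (i1 = i2.+1)%N \/ ((i1 <= i2)%N /\ g = (i2 - i1)%:R).
Proof.
set e := 'X - c%:P => fc Kc qnc qdc N1c D1c H.
have ec : e.[c] = 0 by rewrite /e hornerXsubC subrr.
pose L := qn * D1^+2 * f.
pose B := qd * (K * N1 * D1 + f * ((e * N1^`() + N1 *+ i1) * D1
                                   - N1 * (e * D1^`() + D1 *+ i2))).
have HL : qn * (D1 * e^+i2)^+2 * (e * f) = e^+(i2 + i2).+1 * L.
  by rewrite /L (exprS e (i2 + i2)) exprD; ring.
have HR : qd * (K * (N1 * e^+i1) * (D1 * e^+i2) +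
        e * f * ((N1 * e^+i1)^`() * (D1 * e^+i2)
                - (N1 * e^+i1) * (D1 * e^+i2)^`())) = e^+(i1 + i2) * B.
  have -> : e * f * ((N1 * e^+i1)^`() * (D1 * e^+i2) - (N1 * e^+i1) * (D1 * e^+i2)^`())
     = f * ((e * (N1 * e^+i1)^`()) * (D1 * e^+i2) - (N1 * e^+i1) * (e * (D1 * e^+i2)^`())).
    by ring.
  rewrite !e_deriv /B exprD -/e; ring.
have Lc : L.[c] != 0 by rewrite /L !hornerE !mulf_neq0 // expf_neq0.
have Bc : B.[c] = qd.[c] * f.[c] * N1.[c] * D1.[c] * (g + i1%:R - i2%:R).
  rewrite /B /e !(hornerE, hornerMn) subrr Kc; ring.
rewrite HL HR in H.
have [le1 eq1] := @mult_cmp c L B _ _ Lc H.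
have [ei|ei] := eqVneq i1 i2.+1; first by left.
have [g0|g0] := eqVneq (g + i1%:R - i2%:R) 0.
  right; split; first lia.
  rewrite natrB; last lia.
  by apply/eqP; rewrite -subr_eq0 opprB addrA; apply/eqP.
left; have := eq1; rewrite Bc !mulf_neq0 // => /(_ isT); lia.
Qed.



Lemma der_1m (x : R) : is_derive x 1 (fun y : R => 1 - y) (-1).
Proof.
rewrite (_ : (fun y => 1 - y) = cst 1 - id); last by apply/funext.
have := @is_deriveB R R^o R^o (cst 1) id x 1 0 1 _ _; rewrite sub0r; exact.
Qed.

Lemma der_1p (x : R) : is_derive x 1 (fun y : R => 1 + y) 1.
Proof.
rewrite (_ : (fun y => 1 + y) = cst 1 + id); last by apply/funext.
have := @is_deriveD R R^o R^o (cst 1) id x 1 0 1 _ _; rewrite add0r; exact.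
Qed.

Lemma der_pow_m (a x : R) : x < 1 ->
  is_derive x 1 (fun y => powR (1 - y) a) (a * powR (1 - x) (a - 1) * -1).
Proof.
move=> x1.
have h1 : 0 < 1 - x by rewrite subr_gt0.
have h := @is_derive1_comp _ (fun t => powR t a) (fun y => 1 - y) x _ _ (is_derive1_powR a h1) (der_1m x).
exact: h.
Qed.

Lemma der_pow_p (b x : R) : -1 < x ->
  is_derive x 1 (fun y => powR (1 + y) b) (b * powR (1 + x) (b - 1) * 1).
Proof.
move=> x1.
have h1 : 0 < 1 + x by lra.
have h := @is_derive1_comp _ (fun t => powR t b) (fun y => 1 + y) x _ _ (is_derive1_powR b h1) (der_1p x).
exact: h.
Qed.


Lemma alg_id (qn qd D N D' N' A B x a b : R) : A != 0 -> B != 0 -> D != 0 ->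
  qd != 0 -> 1 - x != 0 -> 1 + x != 0 ->
  qn * (D * D) * (1 - x * x) - qd * ((b * (1 - x) - a * (1 + x)) * N * D
     + (1 - x * x) * (N' * D - N * D')) =
  qd * D * (1 - x) * (1 + x) / (A * B) *
  (A * B * N / D * D' + D * (qn / qd * A * B) -
   (A * B * N' + N * (A * (b * (B / (1 + x)) * 1) + B * (a * (A / (1 - x)) * -1)))).
Proof. move=> hA hB hD hqd h1 h2; field; by rewrite hA hB hD hqd h1 h2. Qed.

Definition Ppoly (a b : R) (qn qd N D : {poly R}) : {poly R} :=
  qn * D^+2 * (1 - 'X^2) - qd * ((b%:P * (1 - 'X) - a%:P * (1 + 'X)) * N * D
     + (1 - 'X^2) * (N^`() * D - N * D^`())).

Lemma deriv_id (a b : R) (rho : R -> R) (qn qd N D : {poly R}) (x : R) :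
  -1 < x -> x < 1 -> D.[x] != 0 -> qd.[x] != 0 ->
  derivable rho x 1 ->
  derive1 rho x = qn.[x] / qd.[x] * powR (1 - x) a * powR (1 + x) b ->
  (\forall y \near x, rho y * D.[y] = powR (1 - y) a * powR (1 + y) b * N.[y]) ->
  (Ppoly a b qn qd N D).[x] = 0.
Proof.
move=> xm xp Dx qdx drho hd hnear.
have rx : rho x * D.[x] = powR (1 - x) a * powR (1 + x) b * N.[x] :=
  nbhs_singleton hnear.
have d1 := is_deriveM (derivableP drho) (is_derive_poly D x).
have d2 := is_deriveM (is_deriveM (der_pow_m a x xp) (der_pow_p b x xm)) (is_derive_poly N x).
have E : 'D_1 (rho * horner D) x =
    'D_1 ((fun y => powR (1 - y) a) * (fun y => powR (1 + y) b) * horner N) x.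
  by apply: near_eq_derive; apply: filterS hnear => y.
case: d1 => _ E1; case: d2 => _ E2.
rewrite E1 E2 in E => {E1 E2}.
rewrite -derive1E hd in E.
have sc : forall u v : R, u *: v = u * v by [].
rewrite /= !sc in E.
have x1 : 1 - x != 0 by rewrite subr_eq0 gt_eqF.
have x2 : 1 + x != 0 by rewrite gt_eqF //; lra.
have pa : powR (1 - x) (a - 1) = powR (1 - x) a / (1 - x).
  by rewrite powRB ?powRr1 //; [lra | apply/implyP].
have pb : powR (1 + x) (b - 1) = powR (1 + x) b / (1 + x).
  by rewrite powRB ?powRr1 //; [lra | apply/implyP].
rewrite pa pb in E.
have Apos : 0 < powR (1 - x) a by apply: powR_gt0; lra.
have Bpos : 0 < powR (1 + x) b by apply: powR_gt0; lra.
have rhoE : rho x = powR (1 - x) a * powR (1 + x) b * N.[x] / D.[x].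
  by rewrite -rx mulfK.
rewrite rhoE in E.
rewrite !fctE in E.
move/eqP: E; rewrite -subr_eq0 => /eqP E.
move: E; set Z := (X in X = 0 -> _) => E.
rewrite /Ppoly !expr2 !(hornerD, hornerN, hornerM, hornerC, hornerX).
set G := (X in X = 0).
have -> : G = qd.[x] * D.[x] * (1 - x) * (1 + x) / (powR (1 - x) a * powR (1 + x) b) * Z.
  rewrite /G /Z; apply: alg_id => //; exact: lt0r_neq0.
by rewrite E mulr0.
Qed.


Lemma roots_seq (p : {poly R}) : p != 0 ->
  exists s : seq R, forall y, p.[y] = 0 -> y \in s.
Proof.
have [n] := ubnP (size p); elim: n p => // n IH p hs p0.
have [[r hr]|nr] := pselect (exists r, root p r).
  have [q hq] := factor_theorem p r hr.
  have q0 : q != 0 by apply: contraNneq p0 => q0; rewrite hq q0 mul0r.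
  have hsq : (size q < n)%N.
    move: hs; rewrite hq size_Mmonic ?monicXsubC // size_XsubC.
    have : (0 < size q)%N by rewrite size_poly_gt0.
    by have -> : (2%R : nat) = 2%N by []; move=> _; rewrite addn2.
  have [s Hs] := IH q hsq q0.
  exists (r :: s) => y; rewrite hq hornerM hornerXsubC => /eqP.
  rewrite mulf_eq0 subr_eq0 in_cons => /orP[/eqP/Hs ->|->]; by rewrite ?orbT.
exists [::] => y py; exfalso; apply: nr; exists y; exact/eqP.
Qed.

Lemma vanish (P g : {poly R}) (s : seq R) : g != 0 ->
  (forall y, -1 < y < 1 -> y \notin s -> g.[y] != 0 -> P.[y] = 0) -> P = 0.
Proof.
move=> g0 H.
have : P * g = 0.
  apply: (@poly0_cofin _ s) => y hy ys; rewrite hornerM.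
  have [gy|gy] := eqVneq g.[y] 0; first by rewrite gy mulr0.
  by rewrite H // mul0r.
by move/eqP; rewrite mulf_eq0 (negPf g0) orbF => /eqP.
Qed.

Lemma near_good (g : {poly R}) (x : R) : -1 < x < 1 -> g.[x] != 0 ->
  \forall y \near x, -1 < y < 1 /\ g.[y] != 0.
Proof.
move=> /andP[xm xp] gx.
have h1 := lt_nbhsr xm.
have h2 := lt_nbhsl xp.
have h3 : \forall y \near x, g.[y] != 0.
  by apply: (@cvgr_neq0 R R^o R (nbhs x) _ (horner g) g.[x]) => //; exact: continuous_horner.
near=> y; split; last by near: y.
apply/andP; split; [near: y; exact: h1| near: y; exact: h2].
Unshelve. all: by end_near.
Qed.

Lemma excl (F G p1 r1 p2 r2 : {poly R}) (c : R) (s : seq R) :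
  F.[c] = 0 -> G.[c] != 0 -> r1.[c] != 0 -> r2 != 0 ->
  (forall y, -1 < y < 1 -> y \notin s ->
     F.[y] * (p1.[y] / r1.[y]) = G.[y] * (p2.[y] / r2.[y])) ->
  p2.[c] = 0.
Proof.
move=> Fc Gc r1c r20 H.
have r10 : r1 != 0 by apply: contraNneq r1c => ->; rewrite horner0.
have Q0 : F * p1 * r2 - G * p2 * r1 = 0.
  apply: (@vanish _ (r1 * r2) s); first by rewrite mulf_neq0.
  move=> y hy ys; rewrite hornerM mulf_eq0 negb_or => /andP[ry1 ry2].
  have := H y hy ys; rewrite !(hornerD, hornerN, hornerM) => E.
  apply/eqP; rewrite subr_eq0; apply/eqP.
  rewrite (_ : F.[y] * p1.[y] * r2.[y] = F.[y] * (p1.[y] / r1.[y]) * r1.[y] * r2.[y]).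
    by rewrite E; field; rewrite ry2.
  by field; rewrite ry1.
have := congr1 (horner^~ c) Q0; rewrite !(hornerD, hornerN, hornerM) Fc horner0.
rewrite !mul0r sub0r => /eqP; rewrite oppr_eq0 !mulf_eq0 (negPf Gc) (negPf r1c) /=.
by rewrite orbF => /eqP.
Qed.

End Helpers.

Section Excl.
Variable R : realType.

Lemma powRn1m (y : R) (k : nat) : y < 1 -> powR (1 - y) (k%:R + 1) = (1 - y)^+k.+1.
Proof. by move=> h; rewrite -mulrSr powR_mulrn //; lra. Qed.

Lemma powRn1p (y : R) (k : nat) : -1 < y -> powR (1 + y) (k%:R + 1) = (1 + y)^+k.+1.
Proof. by move=> h; rewrite -mulrSr powR_mulrn //; lra. Qed.

Lemma excl2 (rho W1 W2 : R -> R) (F G p1 r1 p2 r2 : {poly R}) (c : R) :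
  F.[c] = 0 -> G.[c] != 0 -> r1.[c] != 0 -> r2 != 0 ->
  cofin11 (fun x => rho x = W1 x * (p1.[x] / r1.[x])) ->
  cofin11 (fun x => rho x = W2 x * (p2.[x] / r2.[x])) ->
  (forall y, -1 < y < 1 -> exists C, C != 0 /\ W1 y = C * F.[y] /\ W2 y = C * G.[y]) ->
  p2.[c] = 0.
Proof.
move=> Fc Gc r1c r20 [s1 H1] [s2 H2] HW.
apply: (@excl R F G p1 r1 p2 r2 c (s1 ++ s2)) => // y hy.
rewrite mem_cat negb_or => /andP[ys1 ys2].
have [C [C0 [E1 E2]]] := HW y hy.
have := H1 y hy ys1; rewrite (H2 y hy ys2) E1 E2 -!mulrA => /mulfI.
by move=> /(_ C0) ->.
Qed.

Lemma regpm_neq0 (r : {poly R}) : regpm r -> r != 0.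
Proof. by case=> h _; apply: contraNneq h => ->; rewrite horner0. Qed.

Lemma cofin_one (rho : R -> R) (p r : {poly R}) :
  cofin11 (fun x => rho x = p.[x] / r.[x]) ->
  cofin11 (fun x => rho x = (fun _ => 1) x * (p.[x] / r.[x])).
Proof. by case=> s Hs; exists s => y hy ys; rewrite mul1r; exact: Hs. Qed.

Lemma ex12 (a b : R) (rho : R -> R) : ~ (case_i a b rho /\ case_ii a b rho).
Proof.
  move=> [[p1 [r1 [hr1 C1]]] [[p2 [r2 [hr2 [C2 nz]]]] [k ak]]]; subst a.
  move: nz; suff -> : p2.[1] = 0 by rewrite mul0r mulr0 eqxx.
  apply: (@excl2 rho _ _ ((1 - 'X)^+k.+1) 1 p1 r1 p2 r2 1 _ _ _ (regpm_neq0 r2 hr2) C1 C2).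
  - by rewrite !hornerE subrr expr0n.
  - by rewrite hornerE oner_neq0.
  - by case: hr1.
  move=> y /andP[ym yp]; exists (powR (1 + y) (b + 1)); split.
    by rewrite gt_eqF // powR_gt0 //; lra.
  rewrite powRn1m // !hornerE; split; [exact: mulrC | by []].
Qed.

Lemma ex13 (a b : R) (rho : R -> R) : ~ (case_i a b rho /\ case_iii a b rho).
Proof.
  move=> [[p1 [r1 [hr1 C1]]] [[p2 [r2 [hr2 [C2 nz]]]] [m bm]]]; subst b.
  move: nz; suff -> : p2.[-1] = 0 by rewrite mul0r mulr0 eqxx.
  apply: (@excl2 rho _ _ ((1 + 'X)^+m.+1) 1 p1 r1 p2 r2 (-1) _ _ _ (regpm_neq0 r2 hr2) C1 C2).
  - by rewrite !hornerE subrr expr0n.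
  - by rewrite hornerE oner_neq0.
  - by case: hr1.
  move=> y /andP[ym yp]; exists (powR (1 - y) (a + 1)); split.
    by rewrite gt_eqF // powR_gt0 //; lra.
  by rewrite powRn1p // !hornerE.
Qed.

Lemma ex14 (a b : R) (rho : R -> R) : ~ (case_i a b rho /\ case_iv a b rho).
Proof.
  move=> [[p1 [r1 [hr1 C1]]] [[p2 [r2 [hr2 [C2 [nz nz']]]]] [[k ak] [m bm]]]]; subst a b.
  move: nz; suff -> : p2.[1] = 0 by rewrite mul0r eqxx.
  apply: (@excl2 rho _ _ ((1 - 'X)^+k.+1 * (1 + 'X)^+m.+1) 1 p1 r1 p2 r2 1 _ _ _
     (regpm_neq0 r2 hr2) C1 (cofin_one rho p2 r2 C2)).
  - by rewrite !hornerE subrr expr0n mul0r.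
  - by rewrite hornerE oner_neq0.
  - by case: hr1.
  move=> y /andP[ym yp]; exists 1; split; first exact: oner_neq0.
  by rewrite powRn1m // powRn1p // !hornerE ?mul1r.
Qed.

Lemma ex23 (a b : R) (rho : R -> R) : ~ (case_ii a b rho /\ case_iii a b rho).
Proof.
  move=> [[[p2 [r2 [hr2 [C2 nz]]]] [k ak]] [[p3 [r3 [hr3 [C3 nz3]]]] [m bm]]]; subst a b.
  move: nz; suff -> : p2.[1] = 0 by rewrite mul0r mulr0 eqxx.
  apply: (@excl2 rho _ _ ((1 - 'X)^+k.+1) ((1 + 'X)^+m.+1) p3 r3 p2 r2 1 _ _ _
     (regpm_neq0 r2 hr2) C3 C2).
  - by rewrite !hornerE subrr expr0n.
  - by rewrite !hornerE expf_neq0 //; lra.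
  - by case: hr3.
  move=> y /andP[ym yp]; exists 1; split; first exact: oner_neq0.
  by rewrite powRn1m // powRn1p // !hornerE ?mul1r.
Qed.

Lemma ex24 (a b : R) (rho : R -> R) : ~ (case_ii a b rho /\ case_iv a b rho).
Proof.
  move=> [[[p2 [r2 [hr2 [C2 nz]]]] [k ak]] [[p4 [r4 [hr4 [C4 [nz1 nz4]]]]] [_ [m bm]]]]; subst a b.
  move: nz4; suff -> : p4.[-1] = 0 by rewrite mul0r eqxx.
  apply: (@excl2 rho _ _ ((1 + 'X)^+m.+1) 1 p2 r2 p4 r4 (-1) _ _ _
     (regpm_neq0 r4 hr4) C2 (cofin_one rho p4 r4 C4)).
  - by rewrite !hornerE subrr expr0n.
  - by rewrite hornerE oner_neq0.
  - by case: hr2.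
  move=> y /andP[ym yp]; exists 1; split; first exact: oner_neq0.
  by rewrite powRn1p // !hornerE ?mul1r.
Qed.

Lemma ex34 (a b : R) (rho : R -> R) : ~ (case_iii a b rho /\ case_iv a b rho).
Proof.
  move=> [[[p3 [r3 [hr3 [C3 nz]]]] [m bm]] [[p4 [r4 [hr4 [C4 [nz4 nz']]]]] [[k ak] _]]]; subst a b.
  move: nz4; suff -> : p4.[1] = 0 by rewrite mul0r eqxx.
  apply: (@excl2 rho _ _ ((1 - 'X)^+k.+1) 1 p3 r3 p4 r4 1 _ _ _
     (regpm_neq0 r4 hr4) C3 (cofin_one rho p4 r4 C4)).
  - by rewrite !hornerE subrr expr0n.
  - by rewrite hornerE oner_neq0.
  - by case: hr3.
  move=> y /andP[ym yp]; exists 1; split; first exact: oner_neq0.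
  by rewrite powRn1m // !hornerE ?mul1r.
Qed.

Lemma exclusive (a b : R) (rho : R -> R) :
  ~ (case_i a b rho /\ case_ii a b rho) /\ ~ (case_i a b rho /\ case_iii a b rho) /\
  ~ (case_i a b rho /\ case_iv a b rho) /\ ~ (case_ii a b rho /\ case_iii a b rho) /\
  ~ (case_ii a b rho /\ case_iv a b rho) /\ ~ (case_iii a b rho /\ case_iv a b rho).
Proof.
split; first exact: ex12. split; first exact: ex13. split; first exact: ex14.
split; first exact: ex23. split; first exact: ex24. exact: ex34.
Qed.

End Excl.

Section Exist.
Variable R : realType.

Lemma two0 : (1 - -1 : R) != 0. Proof. by apply/eqP => h; lra. Qed.
Lemma two0' : (-1 - 1 : R) != 0. Proof. by apply/eqP => h; lra. Qed.

Lemma bnd (y : R) : -1 < y < 1 ->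
  [/\ y - 1 != 0, y - -1 != 0, 0 < 1 - y & 0 < 1 + y].
Proof.
by case/andP=> h1 h2; split; [apply/eqP => h; lra|apply/eqP => h; lra|lra|lra].
Qed.

Lemma powRp1 (x r : R) : 0 < x -> powR x (r + 1) = powR x r * x.
Proof. by move=> x0; rewrite powRD ?powRr1 ?ltW //; apply/implyP => _; rewrite gt_eqF. Qed.

Lemma sgn0 (k : nat) : ((-1) ^+ k : R) != 0.
Proof. by rewrite expf_neq0 // oppr_eq0 oner_eq0. Qed.

Lemma existence (qn qd : {poly R}) (a b : R) (rho : R -> R)
  (hqd : regpm qd)
  (hq1 : qn.[1] / qd.[1] != 0) (hqm1 : qn.[-1] / qd.[-1] != 0)
  (hrho : quasi_rational rho)
  (hder : cofin11 (fun x => derivable rho x 1 /\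
            derive1 rho x = qn.[x] / qd.[x] * powR (1 - x) a * powR (1 + x) b)) :
  case_i a b rho \/ case_ii a b rho \/ case_iii a b rho \/ case_iv a b rho.
Proof.
case: hqd => qd1 qdm1.
have qn1 : qn.[1] != 0 by apply: contraNneq hq1 => ->; rewrite mul0r.
have qnm1 : qn.[-1] != 0 by apply: contraNneq hqm1 => ->; rewrite mul0r.
have qn0 : qn != 0 by apply: contraNneq qn1 => ->; rewrite horner0.
have qd0 : qd != 0 by apply: contraNneq qd1 => ->; rewrite horner0.
case: hrho => u [v [v0 [s1 H1]]].
case: hder => s2 H2.
pose w := fun y : R => powR (1 - y) a * powR (1 + y) b.
pose N := qn * v.
pose D := qd * u.
pose g := v * qd * \prod_(z <- s1 ++ s2) ('X - z%:P).
have g0 : g != 0 by rewrite !mulf_neq0 // (@prodX_neq0 R).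
have goodE : forall y, g.[y] != 0 ->
    [/\ y \notin s1, y \notin s2, v.[y] != 0 & qd.[y] != 0].
  move=> y; rewrite !hornerM !mulf_eq0 !negb_or => /andP[/andP[vy qdy] py].
  have : y \notin s1 ++ s2.
    by apply: contra py => ys; rewrite (@prodX_root R _ _ ys).
  by rewrite mem_cat negb_or => /andP[].
have wpos : forall y, -1 < y < 1 -> 0 < w y.
  move=> y /andP[ym yp]; rewrite /w mulr_gt0 // powR_gt0 //; lra.
have stepA : forall y, -1 < y < 1 -> g.[y] != 0 -> rho y * D.[y] = w y * N.[y].
  move=> y hy gy; have [ys1 ys2 vy qdy] := goodE y gy.
  have [_ [rhoy E1]] := H1 y hy ys1.
  have [_ E2] := H2 y hy ys2.
  have hu : u.[y] = derive1 rho y / rho y * v.[y] by rewrite E1 divfK.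
  rewrite /D /N /w !hornerM hu E2; field.
  by rewrite rhoy qdy.
have N0 : N != 0 by rewrite mulf_neq0.
have D0 : D != 0.
  apply/negP => /eqP D0; move/negP: N0; apply; apply/eqP.
  apply: (@vanish R N g [::] g0) => y hy _ gy.
  have := stepA y hy gy; rewrite D0 horner0 mulr0 => /esym/eqP.
  by rewrite mulf_eq0 (gt_eqF (wpos y hy)) /= => /eqP.
have stepC : Ppoly R a b qn qd N D = 0.
  apply: (@vanish R _ (g * D) [::]); first by rewrite mulf_neq0.
  move=> y hy _; rewrite hornerM mulf_eq0 negb_or => /andP[gy Dy].
  have [ys1 ys2 vy qdy] := goodE y gy.
  have [drho hd] := H2 y hy ys2.
  case/andP: (hy) => ym yp.
  apply: (@deriv_id R a b rho qn qd N D y ym yp Dy qdy drho hd).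
  apply: filterS (@near_good R g y hy gy) => z [hz gz]; exact: stepA.
have [i1 [N' hN'r hN]] := multiplicity_XsubC N 1.
have [i2 [D' hD'r hD]] := multiplicity_XsubC D 1.
rewrite N0 /= in hN'r; rewrite D0 /= in hD'r.
have N'0 : N' != 0 by apply: contraNneq N0 => h; rewrite hN h mul0r.
have D'0 : D' != 0 by apply: contraNneq D0 => h; rewrite hD h mul0r.
have [j1 [N1 hN1r hN']] := multiplicity_XsubC N' (-1).
have [j2 [D1 hD1r hD']] := multiplicity_XsubC D' (-1).
rewrite N'0 /= in hN1r; rewrite D'0 /= in hD1r.
have N1m : N1.[-1] != 0 by [].
have D1m : D1.[-1] != 0 by [].
have N1p : N1.[1] != 0.
  by apply: contra hN'r; rewrite hN' rootE hornerM => /eqP->; rewrite mul0r.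
have D1p : D1.[1] != 0.
  by apply: contra hD'r; rewrite hD' rootE hornerM => /eqP->; rewrite mul0r.
move/eqP: stepC; rewrite /Ppoly subr_eq0 => /eqP hid.
set K := b%:P * (1 - 'X) - a%:P * (1 + 'X) in hid.
have t0 := two0; have t0' := two0'.
have r1 : (i1 = i2.+1)%N \/ ((i1 <= i2)%N /\ a = (i2 - i1)%:R).
  have e1f : (1 - 'X^2 : {poly R}) = ('X - 1%:P) * (- ('X - (-1)%:P)).
    by rewrite polyCN polyC1; ring.
  rewrite e1f hN hD hN' hD' in hid.
  apply: (@mult_lemma R 1 a qn qd _ K (N1 * ('X - (-1)%:P)^+j1) (D1 * ('X - (-1)%:P)^+j2) i1 i2 _ _ qn1 qd1 _ _ hid).
  - by rewrite !hornerE oppr_eq0.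
  - rewrite /K !hornerE; ring.
  - by rewrite hornerM horner_exp hornerXsubC mulf_neq0 // expf_neq0.
  - by rewrite hornerM horner_exp hornerXsubC mulf_neq0 // expf_neq0.
have r2 : (j1 = j2.+1)%N \/ ((j1 <= j2)%N /\ b = (j2 - j1)%:R).
  have e2f : (1 - 'X^2 : {poly R}) = ('X - (-1)%:P) * (- ('X - 1%:P)).
    by rewrite polyCN polyC1; ring.
  have hN2 : N = (N1 * ('X - 1%:P)^+i1) * ('X - (-1)%:P)^+j1 by rewrite hN hN' mulrAC.
  have hD2 : D = (D1 * ('X - 1%:P)^+i2) * ('X - (-1)%:P)^+j2 by rewrite hD hD' mulrAC.
  rewrite e2f hN2 hD2 in hid.
  apply: (@mult_lemma R (-1) b qn qd _ K (N1 * ('X - 1%:P)^+i1) (D1 * ('X - 1%:P)^+i2) j1 j2 _ _ qnm1 qdm1 _ _ hid).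
  - by rewrite !hornerE oppr_eq0.
  - rewrite /K !hornerE; ring.
  - by rewrite hornerM horner_exp hornerXsubC mulf_neq0 // expf_neq0.
  - by rewrite hornerM horner_exp hornerXsubC mulf_neq0 // expf_neq0.
have [sr Hsr] := @roots_seq R (g * D) (mulf_neq0 g0 D0).
have rep : forall y, -1 < y < 1 -> y \notin sr ->
    rho y = w y * (N.[y] / D.[y]) /\ D1.[y] != 0.
  move=> y hy ys.
  have : (g * D).[y] != 0 by apply: contra ys => /eqP; exact: Hsr.
  rewrite hornerM mulf_eq0 negb_or => /andP[gy Dy].
  split.
  - by apply: (mulIf Dy); rewrite stepA // -[RHS]mulrA divfK.
  - by apply: contra Dy; rewrite hD hD' !hornerM => /eqP->; rewrite !mul0r.
have hNy : forall y, N.[y] = N1.[y] * (y - -1)^+j1 * (y - 1)^+i1.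
  by move=> y; rewrite hN hN' !hornerM !horner_exp !hornerXsubC.
have hDy : forall y, D.[y] = D1.[y] * (y - -1)^+j2 * (y - 1)^+i2.
  by move=> y; rewrite hD hD' !hornerM !horner_exp !hornerXsubC.
case: r1 => [ei | [li ai]]; case: r2 => [ej | [lj bj]].
- left; rewrite /case_i /in_wQpm.
  exists (- N1), D1; split; first by split.
  exists sr => y hy ys; have [rhoy D1y] := rep y hy ys.
  have [t1 t2 p1 p2] := bnd y hy.
  have X1 : (y - 1)^+i2 != 0 by rewrite expf_neq0.
  have X2 : (y - -1)^+j2 != 0 by rewrite expf_neq0.
  cbv beta; rewrite rhoy /w hNy hDy ei ej !powRp1 // hornerN !exprS.
  by field; rewrite D1y X1 X2.
- right; right; left; rewrite /case_iii; split; last by exists (j2 - j1)%N.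
  exists (- N1), D1; split; first by split.
  split.
    exists sr => y hy ys; have [rhoy D1y] := rep y hy ys.
    have [t1 t2 p1 p2] := bnd y hy.
    have X1 : (y - 1)^+i2 != 0 by rewrite expf_neq0.
    have X2 : (y - -1)^+j1 != 0 by rewrite expf_neq0.
    have X2' : (y - -1)^+(j2 - j1)%N != 0 by rewrite expf_neq0.
    have ex2 : (y - -1)^+j2 = (y - -1)^+j1 * (y - -1)^+(j2 - j1)%N by rewrite -exprD subnKC.
    have ex3 : (1 + y)^+(j2 - j1)%N = (y - -1)^+(j2 - j1)%N.
      by congr (_ ^+ _); ring.
    rewrite rhoy /w hNy hDy ei bj powR_mulrn ?ltW // powRp1 // hornerN !exprS ex2 ex3.
    by field; rewrite D1y X1 X2 X2'.
  by rewrite hornerN !mulf_neq0 ?invr_neq0 ?oppr_eq0 //.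
- right; left; rewrite /case_ii; split; last by exists (i2 - i1)%N.
  exists (((-1)^+(i2 - i1)%N)%:P * N1), D1; split; first by split.
  split.
    exists sr => y hy ys; have [rhoy D1y] := rep y hy ys.
    have [t1 t2 p1 p2] := bnd y hy.
    have X1 : (y - 1)^+i1 != 0 by rewrite expf_neq0.
    have X1' : (y - 1)^+(i2 - i1)%N != 0 by rewrite expf_neq0.
    have X2 : (y - -1)^+j2 != 0 by rewrite expf_neq0.
    have ex2 : (y - 1)^+i2 = (y - 1)^+i1 * (y - 1)^+(i2 - i1)%N by rewrite -exprD subnKC.
    have ex3 : (1 - y)^+(i2 - i1)%N = (-1)^+(i2 - i1)%N * (y - 1)^+(i2 - i1)%N.
      by rewrite -exprMn; congr (_ ^+ _); ring.
    rewrite rhoy /w hNy hDy ej ai powR_mulrn ?ltW // powRp1 // hornerM hornerC !exprS ex2 ex3.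
    by field; rewrite D1y X1 X1' X2.
  by rewrite hornerM hornerC !mulf_neq0 ?invr_neq0 ?sgn0 //.
- right; right; right; rewrite /case_iv; split; last by split; [exists (i2 - i1)%N | exists (j2 - j1)%N].
  exists (((-1)^+(i2 - i1)%N)%:P * N1), D1; split; first by split.
  split; last first.
    by rewrite !hornerM !hornerC !mulf_neq0 ?invr_neq0 ?sgn0.
  exists sr => y hy ys; have [rhoy D1y] := rep y hy ys.
  have [t1 t2 p1 p2] := bnd y hy.
  have X1 : (y - 1)^+i1 != 0 by rewrite expf_neq0.
  have X1' : (y - 1)^+(i2 - i1)%N != 0 by rewrite expf_neq0.
  have X2 : (y - -1)^+j1 != 0 by rewrite expf_neq0.
  have X2' : (y - -1)^+(j2 - j1)%N != 0 by rewrite expf_neq0.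
  have ex1 : (y - 1)^+i2 = (y - 1)^+i1 * (y - 1)^+(i2 - i1)%N by rewrite -exprD subnKC.
  have ex2 : (y - -1)^+j2 = (y - -1)^+j1 * (y - -1)^+(j2 - j1)%N by rewrite -exprD subnKC.
  have ex3 : (1 - y)^+(i2 - i1)%N = (-1)^+(i2 - i1)%N * (y - 1)^+(i2 - i1)%N.
    by rewrite -exprMn; congr (_ ^+ _); ring.
  have ex4 : (1 + y)^+(j2 - j1)%N = (y - -1)^+(j2 - j1)%N.
    by congr (_ ^+ _); ring.
  rewrite rhoy /w hNy hDy ai bj !powR_mulrn ?ltW // hornerM hornerC ex1 ex2 ex3 ex4.
  by field; rewrite D1y X1 X1' X2 X2'.
Qed.

End Exist.

Theorem mainTheorem19 (R : realType) (qn qd : {poly R}) (a b : R) (rho : R -> R)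
  (hqd : regpm qd)
  (hq1 : qn.[1] / qd.[1] != 0) (hqm1 : qn.[-1] / qd.[-1] != 0)
  (hrho : quasi_rational rho)
  (hder : cofin11 (fun x => derivable rho x 1 /\
            derive1 rho x = qn.[x] / qd.[x] * powR (1 - x) a * powR (1 + x) b)) :
  (case_i a b rho \/ case_ii a b rho \/ case_iii a b rho \/ case_iv a b rho) /\
  ~ (case_i a b rho /\ case_ii a b rho) /\ ~ (case_i a b rho /\ case_iii a b rho) /\
  ~ (case_i a b rho /\ case_iv a b rho) /\ ~ (case_ii a b rho /\ case_iii a b rho) /\
  ~ (case_ii a b rho /\ case_iv a b rho) /\ ~ (case_iii a b rho /\ case_iv a b rho).
Proof.
split; first exact: (@existence R qn qd a b rho hqd hq1 hqm1 hrho hder).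
exact: (@exclusive R a b rho).
Qed.
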